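(* For every $X\in\{\mathsf{T},\mathsf{S}\}^*$, $X\mathsf{T}\mathsf{S}\mathsf{T}\sqsubseteq X\mathsf{T}$.
   Context: Fix attribute–taxonomy pairs $A_1{:}T_1,\dots,A_d{:}T_d$ with distinct attribute names, where each taxonomy $T_i=(V_i,\le_{V_i})$ is a poset. A t-tuple over a t-schema $S\subseteq\{A_1{:}T_1,\dots,A_d{:}T_d\}$ maps each $A_i$ in $S$ to a value of $V_i$; $\mathcal{D}$ is the set of all t-tuples over all such t-schemas. A preference relation is a binary relation $\succeq$ on $\mathcal{D}$. Preferences are given by a formula $F(x,y)=\bigvee_i P_i(x,y)$, a disjunction of statements; each statement $P_i$ is a disjunction of clauses, each clause a satisfiable conjunction of atoms of the forms $x[A_i]\le_{V_i} v$, $x[A_i]\not\le_{V_i} v$, $y[A_i]\le_{V_i} v$, $y[A_i]\not\le_{V_i} v$; the formula induces $t_1\succeq t_2\iff F(t_1,t_2)$. Operator $\mathsf{T}$ maps a formula to one inducing the transitive closure over $\mathcal{D}$ of the induced relation. Operator $\mathsf{S}$ (specificity-based refinement): repeat rounds; in a round, for each statement $P_i$ let $\mathrm{Impl}(P_i)$ be the set of statements $P_j$ such that $P_j(t_2,t_1)\Rightarrow P_i(t_1,t_2)$ for all $t_1,t_2\in\mathcal{D}$ but not conversely; simultaneously replace every $P_i$ with nonempty $\mathrm{Impl}(P_i)$ by $P_i(x,y)\wedge\bigwedge_{P_j\in \mathrm{Impl}(P_i)}\neg P_j(y,x)$; stop when no $\mathrm{Impl}$ set is nonempty. After each operator, contradictory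 clauses and subsumed statements are removed. For $X\in\{\mathsf{T},\mathsf{S}\}^*$, $\succeq_X$ is the relation induced by applying the operators of $X$ in order to the initial formula. Containment $X\sqsubseteq Y$ means $\succeq_X\subseteq\succeq_Y$ for every initial preference formula. *)

(* Defs.v *)
From Stdlib Require Import Relation_Definitions Relation_Operators ClassicalEpsilon.
From mathcomp Require Import all_boot.

Set Implicit Arguments.
Unset Strict Implicit.
Unset Printing Implicit Defensive.

Record taxonomy := Taxonomy {
  tcar :> Type;
  tle : tcar -> tcar -> Prop;
  tle_refl : forall x, tle x x;
  tle_anti : forall x y, tle x y -> tle y x -> x = y;
  tle_trans : forall x y z, tle x y -> tle y z -> tle x z }.

(** Attributes A_1..A_d are the indices 'I_d; attribute i carries taxonomy
    [Tx i].  A t-tuple over a t-schema S is encoded as a partial map: the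
    schema is the set of indices where the value is [Some _].  Hence
    [ttuple Tx] is exactly the set D of all t-tuples over all t-schemas. *)
Definition ttuple (d : nat) (Tx : 'I_d -> taxonomy) :=
  forall i : 'I_d, option (Tx i).

Inductive side := SX | SY.

(* atom  x[A_i] <= v  (a_pos = true)  or  x[A_i] </= v  (a_pos = false) *)
Record atom (d : nat) (Tx : 'I_d -> taxonomy) := Atom {
  a_side : side; a_attr : 'I_d; a_val : Tx a_attr; a_pos : bool }.

Definition clause d (Tx : 'I_d -> taxonomy) := seq (atom Tx).
Definition statement d (Tx : 'I_d -> taxonomy) := seq (clause Tx).
Definition formula d (Tx : 'I_d -> taxonomy) := seq (statement Tx).

Section Semantics.
Variables (d : nat) (Tx : 'I_d -> taxonomy).

Definition atom_holds (a : atom Tx) (t1 t2 : ttuple Tx) : Prop :=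
  let t := if a_side a is SX then t1 else t2 in
  let le := match t (a_attr a) with Some u => tle u (a_val a) | None => False end in
  if a_pos a then le else ~ le.

Definition clause_holds (c : clause Tx) t1 t2 : Prop :=
  foldr (fun a P => atom_holds a t1 t2 /\ P) True c.
Definition stmt_holds (P : statement Tx) t1 t2 : Prop :=
  foldr (fun c Q => clause_holds c t1 t2 \/ Q) False P.
Definition formula_holds (F : formula Tx) t1 t2 : Prop :=
  foldr (fun P Q => stmt_holds P t1 t2 \/ Q) False F.

Definition induced (F : formula Tx) : relation (ttuple Tx) :=
  fun t1 t2 => formula_holds F t1 t2.

Definition clause_sat (c : clause Tx) : Prop :=
  exists t1 t2, clause_holds c t1 t2.

(** Initial formulas: every clause is satisfiable. *)
Definition wf_formula (F : formula Tx) : Prop :=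
  foldr (fun P acc =>
    foldr (fun c acc' => clause_sat c /\ acc') True P /\ acc) True F.

Definition decP (P : Prop) : bool :=
  if excluded_middle_informative P then true else false.

(** * Normalization after each operator:
    remove contradictory (unsatisfiable) clauses, then remove subsumed
    statements (a statement implied by another one; among equivalent
    statements the one with the smallest position is kept). *)
Definition stmt_implies (P Q : statement Tx) : Prop :=
  forall t1 t2, stmt_holds P t1 t2 -> stmt_holds Q t1 t2.

Definition subsumedb (F : formula Tx) (i : nat) : bool :=
  decP (exists j, j < size F /\ j <> i /\
          stmt_implies (nth [::] F i) (nth [::] F j) /\
          (~ stmt_implies (nth [::] F j) (nth [::] F i) \/ j < i)).

Definition normF (F : formula Tx) : formula Tx :=
  let Fs := map (filter (fun c => decP (clause_sat c))) F in
  [seq nth [::] Fs i | i <- iota 0 (size Fs) & ~~ subsumedb Fs i].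

Definition in_impl (F : formula Tx) (i j : nat) : bool :=
  decP ((forall t1 t2, stmt_holds (nth [::] F j) t2 t1 ->
                       stmt_holds (nth [::] F i) t1 t2) /\
        ~ (forall t1 t2, stmt_holds (nth [::] F i) t1 t2 ->
                         stmt_holds (nth [::] F j) t2 t1)).

Definition impl_list (F : formula Tx) (i : nat) : seq (statement Tx) :=
  [seq nth [::] F j | j <- iota 0 (size F) & in_impl F i j].

Definition swap_side s := if s is SX then SY else SX.
Definition negswap (a : atom Tx) : atom Tx :=
  @Atom d Tx (swap_side (a_side a)) (a_attr a) (a_val a) (~~ a_pos a).

(* DNF of  ~ P(y,x) *)
Definition neg_stmt (P : statement Tx) : statement Tx :=
  foldr (fun C acc => [seq a :: c | a <- map negswap C, c <- acc]) [:: [::]] P.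

Definition conj_stmt (P Q : statement Tx) : statement Tx :=
  [seq c1 ++ c2 | c1 <- P, c2 <- Q].

(* P_i  ~>  P_i /\ /\_{P_j in Impl(P_i)} ~ P_j(y,x)   (unchanged if Impl empty) *)
Definition refine_stmt (F : formula Tx) (i : nat) : statement Tx :=
  foldl (fun acc Pj => conj_stmt acc (neg_stmt Pj)) (nth [::] F i) (impl_list F i).

(* one round: all statements replaced simultaneously *)
Definition round (F : formula Tx) : formula Tx :=
  map (refine_stmt F) (iota 0 (size F)).

Definition stable (F : formula Tx) : Prop :=
  forall i, i < size F -> impl_list F i = [::].

Inductive op := OpT | OpS.

Definition is_T_operator (Top : formula Tx -> formula Tx) : Prop :=
  forall F t1 t2, induced (Top F) t1 t2 <-> clos_trans _ (induced F) t1 t2.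

Definition step (Top : formula Tx -> formula Tx) (o : op) (F G : formula Tx) : Prop :=
  match o with
  | OpT => G = normF (Top F)
  | OpS => exists n, stable (iter n round F) /\ G = normF (iter n round F)
  end.

Inductive run (Top : formula Tx -> formula Tx) : seq op -> formula Tx -> formula Tx -> Prop :=
  | run_nil F : run Top [::] F F
  | run_cons o X F G H : step Top o F G -> run Top X G H -> run Top (o :: X) F H.

Definition contained (Top : formula Tx -> formula Tx) (X Y : seq op) : Prop :=
  forall F, wf_formula F ->
  forall GX GY, run Top X F GX -> run Top Y F GY ->
  forall t1 t2, induced GX t1 t2 -> induced GY t1 t2.

End Semantics.

(* Main.v *)
Require Import Defs.
From Stdlib Require Import Relation_Definitions Relation_Operators ClassicalEpsilon.
From mathcomp Require Import all_boot.
From mathcomp Require Import zify.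

Set Implicit Arguments.
Unset Strict Implicit.
Unset Printing Implicit Defensive.

Lemma decPP (P : Prop) : reflect P (Defs.decP P).
Proof. rewrite /Defs.decP; case: (excluded_middle_informative P) => h; constructor; exact h. Qed.

Lemma fh_nth {d} {Tx : 'I_d -> taxonomy} (F : formula Tx) t1 t2 :
  formula_holds F t1 t2 <-> exists i, i < size F /\ stmt_holds (nth [::] F i) t1 t2.
Proof.
elim: F => [|P F IH] /=; first by split=> // -[i []].
split.
- case=> [h|/IH [i [hi h]]]; first by exists 0.
  by exists i.+1.
- case=> [[|i]] /= [hi h]; first by left.
  by right; apply/IH; exists i.
Qed.

Lemma fh_map_filter {d} {Tx : 'I_d -> taxonomy} (f : nat -> statement Tx)
  (p : pred nat) (s : seq nat) t1 t2 :
  formula_holds (map f (filter p s)) t1 t2 <->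
  exists i, i \in s /\ p i /\ stmt_holds (f i) t1 t2.
Proof.
elim: s => [|x s IH] /=; first by split=> // -[i []].
case px: (p x) => /=.
- split.
  + case=> [h|/IH [i [hi [pi h]]]]; first by exists x; rewrite inE eqxx.
    by exists i; rewrite inE hi orbT.
  + case=> i [+ [pi h]]; rewrite inE => /orP [/eqP e|hi]; first by subst; left.
    by right; apply/IH; exists i.
- rewrite IH; split; case=> i [hi [pi h]]; exists i.
  + by rewrite inE hi orbT.
  + move: hi; rewrite inE => /orP [/eqP e|hi] //; by rewrite e px in pi.
Qed.

Lemma sh_filter_sat {d} {Tx : 'I_d -> taxonomy} (P : statement Tx) t1 t2 :
  stmt_holds P t1 t2 -> stmt_holds (filter (fun c => Defs.decP (clause_sat c)) P) t1 t2.
Proof.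
elim: P => [|c P IH] //= [h|h].
- have : Defs.decP (clause_sat c) by apply/decPP; exists t1, t2.
  by move=> ->; left.
- case: (Defs.decP _) => /=; [right|]; exact: IH.
Qed.

Lemma sh_filter {d} {Tx : 'I_d -> taxonomy} (q : pred (clause Tx)) (P : statement Tx) t1 t2 :
  stmt_holds (filter q P) t1 t2 -> stmt_holds P t1 t2.
Proof.
elim: P => [|c P IH] //=; case: (q c) => /=; [case=> h|move=> h]; auto.
Qed.

Lemma count_strict (a1 a2 : pred nat) (s : seq nat) :
  subpred a1 a2 -> (exists x, x \in s /\ a2 x /\ ~~ a1 x) -> count a1 s < count a2 s.
Proof.
move=> sub; elim: s => [|y s IH] /=; first by case=> x [].
case=> x [+ [h2 h1]]; rewrite inE => /orP [/eqP e|hx].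
- subst y; rewrite (negbTE h1) h2 /= add0n add1n ltnS; exact: sub_count.
- have := IH (ex_intro _ x (conj hx (conj h2 h1))).
  case a1y: (a1 y); first by rewrite (sub _ a1y).
  by case: (a2 y) => /=; lia.
Qed.

Lemma arith1 (a b n k j : nat) : a < b -> k < n -> a * n + k < b * n + j.
Proof. nia. Qed.
Lemma arith2 (a b n k j : nat) : a <= b -> k < j -> a * n + k < b * n + j.
Proof. nia. Qed.

Lemma normF_complete {d} {Tx : 'I_d -> taxonomy} (F : formula Tx) t1 t2 :
  formula_holds F t1 t2 -> formula_holds (normF F) t1 t2.
Proof.
move=> /fh_nth [i [hi h]].
rewrite /normF.
set Fs := map (filter (fun c => Defs.decP (clause_sat c))) F.
have hs : size Fs = size F by rewrite size_map.
have hi' : stmt_holds (nth [::] Fs i) t1 t2.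
  by rewrite (nth_map [::]) //; apply: sh_filter_sat.
set n := size Fs.
pose imp i j := stmt_implies (nth [::] Fs i) (nth [::] Fs j).
pose U i := count (fun j => Defs.decP (imp i j)) (iota 0 n).
have key : forall N i, U i * n + i < N -> i < n ->
    exists k, k < n /\ ~~ subsumedb Fs k /\ imp i k.
  elim=> [|N IH] j //; move=> hN hj.
  case sj: (subsumedb Fs j).
  - move: sj => /decPP [k [hk [hkj [ijk hor]]]].
    have sub : subpred (fun x => Defs.decP (imp k x)) (fun x => Defs.decP (imp j x)).
      move=> x /decPP hx; apply/decPP => a b ha; exact: hx _ _ (ijk _ _ ha).
    have hU : U k <= U j by apply: sub_count.
    have hm : U k * n + k < U j * n + j.
      case: hor => [nk|lt].
      + have : U k < U j.
          apply: count_strict => //; exists j; split; first by rewrite mem_iota /=; lia.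
          split; first by apply/decPP.
          by apply/negP => /decPP.
        move=> lt; exact: arith1.
      + exact: arith2.
    have [m [hm1 [hm2 hm3]]] := IH k ltac:(lia) hk.
    exists m; split=> //; split=> // a b ha; exact: hm3 _ _ (ijk _ _ ha).
  - by exists j; split=> //; rewrite sj; split.
have [k [hk [hsk hik]]] := key _ i (ltnSn _) ltac:(rewrite /n hs //).
apply/fh_map_filter; exists k; split; first by rewrite mem_iota; lia.
split=> //; exact: hik.
Qed.

Lemma normF_sound {d} {Tx : 'I_d -> taxonomy} (F : formula Tx) t1 t2 :
  formula_holds (normF F) t1 t2 -> formula_holds F t1 t2.
Proof.
rewrite /normF => /fh_map_filter [i [hi [_ h]]].
move: hi; rewrite mem_iota size_map add0n => hi.
apply/fh_nth; exists i; split=> //.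
by move: h; rewrite (nth_map [::]) // => /sh_filter.
Qed.

Lemma sh_cat {d} {Tx : 'I_d -> taxonomy} (A B : statement Tx) t1 t2 :
  stmt_holds (A ++ B) t1 t2 -> stmt_holds A t1 t2 \/ stmt_holds B t1 t2.
Proof.
elim: A => [|c A IH] /=; first by right.
case=> [h|/IH [h|h]]; tauto.
Qed.

Lemma ch_cat {d} {Tx : 'I_d -> taxonomy} (A B : clause Tx) t1 t2 :
  clause_holds (A ++ B) t1 t2 -> clause_holds A t1 t2.
Proof. elim: A => [|a A IH] //= [h1 h2]; split; auto. Qed.

Lemma sh_conj {d} {Tx : 'I_d -> taxonomy} (P Q : statement Tx) t1 t2 :
  stmt_holds (conj_stmt P Q) t1 t2 -> stmt_holds P t1 t2.
Proof.
rewrite /conj_stmt; elim: P => [|c P IH] //= /sh_cat [h|h]; last by right; auto.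
left; move: h; clear; elim: Q => [|c2 Q IHQ] //= [h|h]; [exact: ch_cat h | auto].
Qed.

Lemma sh_refine {d} {Tx : 'I_d -> taxonomy} (F : formula Tx) i t1 t2 :
  stmt_holds (refine_stmt F i) t1 t2 -> stmt_holds (nth [::] F i) t1 t2.
Proof.
rewrite /refine_stmt; elim: (impl_list F i) (nth [::] F i) => [|Q L IH] acc //= h.
exact: sh_conj (IH _ h).
Qed.

Lemma round_sound {d} {Tx : 'I_d -> taxonomy} (F : formula Tx) t1 t2 :
  formula_holds (round F) t1 t2 -> formula_holds F t1 t2.
Proof.
rewrite /round => /fh_nth [i [hi h]].
move: hi h; rewrite size_map size_iota => hi.
rewrite (nth_map 0) ?size_iota // nth_iota // add0n => /sh_refine h.
by apply/fh_nth; exists i.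
Qed.

Lemma iter_round_sound {d} {Tx : 'I_d -> taxonomy} n (F : formula Tx) t1 t2 :
  formula_holds (iter n (@round d Tx) F) t1 t2 -> formula_holds F t1 t2.
Proof. elim: n => [|n IH] //= /round_sound; exact: IH. Qed.

Lemma round_stable {d} {Tx : 'I_d -> taxonomy} (F : formula Tx) :
  stable F -> round F = F.
Proof.
move=> st; rewrite /round -{3}(mkseq_nth [::] F) /mkseq.
apply/eq_in_map => i; rewrite mem_iota add0n => /= hi.
by rewrite /refine_stmt st.
Qed.

Lemma iter_stable {d} {Tx : 'I_d -> taxonomy} n m (F : formula Tx) :
  stable (iter n (@round d Tx) F) -> iter (m + n) (@round d Tx) F = iter n (@round d Tx) F.
Proof.
move=> st; elim: m => [|m IH] //; rewrite addSn iterS IH; exact: round_stable.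
Qed.

Lemma step_det {d} {Tx : 'I_d -> taxonomy} Top o (F G1 G2 : formula Tx) :
  step Top o F G1 -> step Top o F G2 -> G1 = G2.
Proof.
case: o => /=; first by move=> -> ->.
move=> [n [s1 ->]] [m [s2 ->]]; congr normF.
case: (leqP n m) => h.
- by rewrite -(subnK h) iter_stable.
- by rewrite -(subnK (ltnW h)) iter_stable.
Qed.

Lemma run_det {d} {Tx : 'I_d -> taxonomy} Top X (F G1 G2 : formula Tx) :
  run Top X F G1 -> run Top X F G2 -> G1 = G2.
Proof.
move=> r; elim: r G2 => [F0|o X0 F0 G H s r IH] G2 r2; first by inversion r2.
inversion r2 as [|o' X' F' G'' H' s' r']; subst. apply: IH. by rewrite (step_det s s').
Qed.

Lemma run_cat {d} {Tx : 'I_d -> taxonomy} Top X Y (F H : formula Tx) :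
  run Top (X ++ Y) F H -> exists G, run Top X F G /\ run Top Y G H.
Proof.
elim: X F => [|o X IH] F /=; first by move=> r; exists F; split=> //; constructor.
move=> r; inversion r as [|o' X' F' G'' H' s' r']; subst.
have [G' [r1 r2]] := IH _ r'.
exists G'; split=> //; econstructor; eauto.
Qed.

Lemma ct_mono {A} (R S : relation A) x y :
  (forall a b, R a b -> S a b) -> clos_trans A R x y -> clos_trans A S x y.
Proof.
move=> h; elim=> [a b /h|a b c _ h1 _ h2]; [by constructor | by econstructor 2; eauto].
Qed.

Lemma ct_idem {A} (R : relation A) x y :
  clos_trans A (clos_trans A R) x y -> clos_trans A R x y.
Proof. elim=> // a b c _ h1 _ h2; econstructor 2; eauto. Qed.

Theorem mainTheorem3 (d : nat) (Tx : 'I_d -> taxonomy)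
  (Top : formula Tx -> formula Tx) (HT : is_T_operator Top) (X : seq op) :
  contained Top (X ++ [:: OpT; OpS; OpT]) (X ++ [:: OpT]).
Proof.
move=> F _ GX GY rX rY t1 t2 hX.
have [G [rG rX']] := run_cat rX.
have [G' [rG' rY']] := run_cat rY.
have eG := run_det rG rG'; subst G'.
inversion rX' as [|o1 X1 F1 G1 H1 s1 r1]; subst.
inversion r1 as [|o2 X2 F2 G2 H2 s2 r2]; subst.
inversion r2 as [|o3 X3 F3 G3 H3 s3 r3]; subst.
inversion r3; subst.
inversion rY' as [|o4 X4 F4 G4 H4 s4 r4]; subst.
inversion r4; subst.
have e1 : G1 = normF (Top G) := s1.
have e3 : GX = normF (Top G2) := s3.
have e4 : GY = normF (Top G) := s4.
have [n [st e2]] : exists n, stable (iter n (@round d Tx) G1) /\ G2 = normF (iter n (@round d Tx) G1) := s2.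
clear s1 s2 s3 s4 r1 r2 r3 r4 rX rY rX' rY'.
subst GX GY G2.
apply: normF_complete.
apply/HT.
apply: ct_idem.
move: hX => /normF_sound /HT.
apply: ct_mono => a b /normF_sound /iter_round_sound.
rewrite e1 => /normF_sound /HT.
done.
Qed.
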